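(* Let $\varepsilon,\beta>0$, let $u_{\varepsilon,\beta,0}\in C^\infty(\mathbb{R})$ satisfy, with $C_0$ independent of $\varepsilon,\beta$, $$\|u_{\varepsilon,\beta,0}\|^2_{L^2}+\|u_{\varepsilon,\beta,0}\|^4_{L^4}+(\beta+\varepsilon^2)\|\partial_x u_{\varepsilon,\beta,0}\|^2_{L^2}\le C_0,\quad (\beta\varepsilon+\beta\varepsilon^2+\beta^2)\|\partial_{xx}^2 u_{\varepsilon,\beta,0}\|^2_{L^2}+(\beta^2\varepsilon^2+\beta^3)\|\partial_{xxx}^3 u_{\varepsilon,\beta,0}\|^2_{L^2}\le C_0,\quad \beta^4\|\partial_{xxxx}^4 u_{\varepsilon,\beta,0}\|^2_{L^2}\le C_0,$$ and let $u_{\varepsilon,\beta}$ be the smooth solution of $$\partial_t u_{\varepsilon,\beta}+\partial_x u_{\varepsilon,\beta}^2+\beta\partial_{xxx}^3u_{\varepsilon,\beta}-\beta\partial_{txx}^3u_{\varepsilon,\beta}+\beta^2\partial_{txxxx}^5u_{\varepsilon,\beta}=\varepsilon\partial_{xx}^2u_{\varepsilon,\beta},\qquad u_{\varepsilon,\beta}(0,\cdot)=u_{\varepsilon,\beta,0}.$$ Then for each $t>0$, $$\|u_{\varepsilon,\beta}(t,\cdot)\|^2_{L^2(\mathbb{R})}+\beta\|\partial_x u_{\varepsilon,\beta}(t,\cdot)\|^2_{L^2(\mathbb{R})}+\beta^2\|\partial_{xx}^2 u_{\varepsilon,\beta}(t,\cdot)\|^2_{L^2(\mathbb{R})}+2\varepsilon\int_0^t\|\partial_x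 u_{\varepsilon,\beta}(s,\cdot)\|^2_{L^2(\mathbb{R})}ds\le C_0,$$ and in particular $$\|u_{\varepsilon,\beta}(t,\cdot)\|_{L^\infty(\mathbb{R})}\le C_0\beta^{-1/4},\qquad \|\partial_x u_{\varepsilon,\beta}(t,\cdot)\|_{L^\infty(\mathbb{R})}\le C_0\beta^{-3/4},$$ where $C_0$ denotes constants depending only on the initial data (not on $\varepsilon,\beta,t$).
   Context: Solutions are smooth and decay, together with their derivatives, as $|x|\to\infty$. *)

(* Defs.v *)
From Stdlib Require Import Reals List.
From Coquelicot Require Import Coquelicot.
Open Scope R_scope.

Definition dt (f : R -> R -> R) : R -> R -> R :=
  fun t x => Derive (fun s => f s x) t.
Definition dx (f : R -> R -> R) : R -> R -> R :=
  fun t x => Derive (fun y => f t y) x.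

(** Iterated partial derivative along a word of directions
    ([true] = d/dt, [false] = d/dx), innermost derivative last in the list. *)
Fixpoint pd (l : list bool) (f : R -> R -> R) : R -> R -> R :=
  match l with
  | nil => f
  | b :: l' => if b then dt (pd l' f) else dx (pd l' f)
  end.

Definition smooth2 (f : R -> R -> R) : Prop :=
  forall (l : list bool) (t x : R),
    ex_derive (fun s => pd l f s x) t /\
    ex_derive (fun y => pd l f t y) x /\
    continuous (fun p : R * R => pd l f (fst p) (snd p)) (t, x).

Definition smooth1 (f : R -> R) : Prop :=
  forall (n : nat) (x : R), ex_derive_n f n x.

Definition decays (f : R -> R -> R) : Prop :=
  forall (l : list bool) (T : R), 0 <= T ->
    exists M : R, forall t x, 0 <= t <= T ->
      Rabs (pd l f t x) <= M / (1 + x ^ 2).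

Definition Rint (f : R -> R) : R :=
  RInt_gen f (Rbar_locally m_infty) (Rbar_locally p_infty).

Definition L2sq (f : R -> R) : R := Rint (fun x => f x ^ 2).
Definition L4pow4 (f : R -> R) : R := Rint (fun x => f x ^ 4).

(* Main.v *)
Require Import Defs.
From Stdlib Require Import Reals Lra Psatz FunctionalExtensionality List.
From Coquelicot Require Import Coquelicot.
Open Scope R_scope.

Lemma is_RInt_inv_sq (K a b : R) : a <= b -> (0 < a \/ b < 0) ->
  is_RInt (fun x => K / x ^ 2) a b (K / a - K / b).
Proof.
  intros Hab H.
  assert (Hnz : forall x, Rmin a b <= x <= Rmax a b -> x <> 0).
  { intros x Hx. rewrite Rmin_left in Hx by lra. rewrite Rmax_right in Hx by lra. lra. }
  replace (K / a - K / b) with (minus ((fun x => - K / x) b) ((fun x => - K / x) a)).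
  2:{ unfold minus, plus, opp; simpl. field. split; intro; subst; lra. }
  apply (is_RInt_derive (V := R_CompleteNormedModule) (fun x => - K / x)).
  - intros x Hx. specialize (Hnz x Hx). auto_derive; [auto|]. field. auto.
  - intros x Hx. specialize (Hnz x Hx). apply (ex_derive_continuous (fun x => K / x ^ 2)). auto_derive. auto.
Qed.

Lemma abs_sub_le x y : Rabs (x - y) <= Rabs x + Rabs y.
Proof. unfold Rminus. eapply Rle_trans. apply Rabs_triang. rewrite Rabs_Ropp. lra. Qed.

Definition decayb (h : R -> R) (K : R) := forall x, Rabs (h x) <= K / (1 + x ^ 2).

Lemma decayb_K h K : decayb h K -> 0 <= K.
Proof.
  intros H. specialize (H 0). replace (1 + 0 ^ 2) with 1 in H by ring.
  pose proof (Rabs_pos (h 0)). unfold Rdiv in H. rewrite Rinv_1 in H. lra.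
Qed.

Lemma cont_ex_RInt (h : R -> R) a b : (forall x, continuous h x) -> ex_RInt h a b.
Proof. intros Hc. apply (ex_RInt_continuous (V := R_CompleteNormedModule)). intros; apply Hc. Qed.

Lemma piece h K a b c : (forall x, continuous h x) -> decayb h K -> a <= b -> 0 < c ->
  (c <= a \/ b <= - c) -> Rabs (RInt h a b) <= K / c.
Proof.
  intros Hc Hd Hab Hc0 Hcase.
  pose proof (decayb_K _ _ Hd) as HK.
  assert (Hi : is_RInt (fun x => K / x ^ 2) a b (K / a - K / b)).
  { apply is_RInt_inv_sq; auto. lra. }
  eapply Rle_trans. apply abs_RInt_le; auto. apply cont_ex_RInt; auto.
  eapply Rle_trans. apply RInt_le with (g := fun x => K / x ^ 2); auto.
  - apply cont_ex_RInt. intros x. apply (continuous_comp h Rabs). apply Hc.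
    apply continuous_Rabs.
  - eexists; eauto.
  - intros x Hx. eapply Rle_trans. apply Hd.
    unfold Rdiv. apply Rmult_le_compat_l; auto.
    assert (0 < x ^ 2) by (destruct Hcase; nra).
    apply Rinv_le_contravar; lra.
  - rewrite (is_RInt_unique _ _ _ _ Hi).
    destruct Hcase as [H1|H1].
    + assert (K / b >= 0). { unfold Rdiv. apply Rle_ge, Rmult_le_pos; auto. left; apply Rinv_0_lt_compat; lra. }
      assert (K / a <= K / c). { unfold Rdiv. apply Rmult_le_compat_l; auto. apply Rinv_le_contravar; lra. }
      lra.
    + assert (K / a <= 0).
      { unfold Rdiv. rewrite <- (Rmult_0_r K). apply Rmult_le_compat_l; auto. left; apply Rinv_lt_0_compat; lra. }
      assert (- (K / b) <= K / c).
      { replace (- (K / b)) with (K / (- b)) by (field; lra). unfold Rdiv. apply Rmult_le_compat_l; auto. apply Rinv_le_contravar; lra. }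
      lra.
Qed.

Notation FR := (filter_prod (Rbar_locally m_infty) (Rbar_locally p_infty)).

Lemma FR_ev N : FR (fun ab : R * R => fst ab < - N /\ N < snd ab).
Proof.
  exists (fun a => a < - N) (fun b => N < b).
  - exists (- N). auto.
  - exists N. auto.
  - intros x y H1 H2. simpl. auto.
Qed.

Lemma chasles_bound h K N a b : (forall x, continuous h x) -> decayb h K -> 0 < N ->
  a < - N -> N < b -> Rabs (RInt h a b - RInt h (- N) N) <= 2 * K / N.
Proof.
  intros Hc Hd HN Ha Hb.
  assert (E : RInt h a b = RInt h a (- N) + RInt h (- N) N + RInt h N b).
  { rewrite <- (RInt_Chasles (V := R_CompleteNormedModule) h a N b) by (apply cont_ex_RInt; auto).
    rewrite <- (RInt_Chasles (V := R_CompleteNormedModule) h a (- N) N) by (apply cont_ex_RInt; auto).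
    unfold plus; simpl. ring. }
  rewrite E.
  pose proof (piece h K a (- N) N Hc Hd ltac:(lra) HN ltac:(lra)).
  pose proof (piece h K N b N Hc Hd ltac:(lra) HN ltac:(lra)).
  replace (2 * K / N) with (K / N + K / N) by (field; lra).
  replace (RInt h a (- N) + RInt h (- N) N + RInt h N b - RInt h (- N) N)
    with (RInt h a (- N) + RInt h N b) by ring.
  eapply Rle_trans. apply Rabs_triang. lra.
Qed.

Lemma tail h K : (forall x, continuous h x) -> decayb h K ->
  is_RInt_gen h (Rbar_locally m_infty) (Rbar_locally p_infty) (Rint h) /\
  forall N, 0 < N -> Rabs (Rint h - RInt h (- N) N) <= 2 * K / N.
Proof.
  intros Hc Hd.
  pose proof (decayb_K _ _ Hd) as HK.
  set (f := fun ab : R * R => RInt h (fst ab) (snd ab)).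
  assert (Hl : exists l : R_CompleteNormedModule, filterlim f FR (locally l)).
  { apply (proj1 (filterlim_locally_cauchy (F := FR) f)).
    intros eps. set (N := (4 * K + 1) / eps).
    assert (HN : 0 < N). { unfold N. apply Rdiv_lt_0_compat; [lra| apply cond_pos]. }
    exists (fun ab : R * R => fst ab < - N /\ N < snd ab). split. apply FR_ev.
    intros [a b] [a' b'] [H1 H2] [H3 H4]; simpl in *.
    pose proof (chasles_bound h K N a b Hc Hd HN H1 H2).
    pose proof (chasles_bound h K N a' b' Hc Hd HN H3 H4).
    assert (4 * K / N < eps).
    { unfold N. pose proof (cond_pos eps). replace (4 * K / ((4 * K + 1) / eps)) with (eps * (4 * K / (4 * K + 1))) by (field; lra).
      rewrite <- (Rmult_1_r eps) at 2. apply Rmult_lt_compat_l; auto.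
      replace (4 * K / (4 * K + 1)) with (1 - 1 / (4 * K + 1)) by (field; lra).
      assert (0 < 1 / (4 * K + 1)) by (apply Rdiv_lt_0_compat; lra). lra. }
    change (Rabs (f (a', b') - f (a, b)) < eps). unfold f; simpl.
    replace (RInt h a' b' - RInt h a b) with ((RInt h a' b' - RInt h (- N) N) - (RInt h a b - RInt h (- N) N)) by ring.
    eapply Rle_lt_trans. apply abs_sub_le.
    replace (4 * K / N) with (2 * K / N + 2 * K / N) in H5 by (field; lra). lra. }
  destruct Hl as [l Hl].
  assert (Hg : is_RInt_gen h (Rbar_locally m_infty) (Rbar_locally p_infty) l).
  { intros P HP. specialize (Hl P HP). unfold filtermapi.
    eapply filter_imp; [| exact Hl]. intros ab Hab. exists (f ab). split; auto.
    apply (RInt_correct (V := R_CompleteNormedModule)). apply cont_ex_RInt; auto. }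
  assert (El : Rint h = l). { apply is_RInt_gen_unique; auto. }
  rewrite El. split; auto.
  intros N HN.
  destruct (Rle_or_lt (Rabs (l - RInt h (- N) N)) (2 * K / N)) as [|Hlt]; auto.
  exfalso.
  assert (Hd0 : 0 < Rabs (l - RInt h (- N) N) - 2 * K / N) by lra.
  set (d := mkposreal _ Hd0).
  assert (H1 := Hl (ball l d) (locally_ball l d)).
  change (FR (fun ab => ball l d (f ab))) in H1.
  assert (H2 := FR_ev N).
  destruct (filter_ex _ (filter_and _ _ H1 H2)) as [[a b] [Hb [Ha1 Ha2]]].
  simpl in *.
  pose proof (chasles_bound h K N a b Hc Hd HN Ha1 Ha2).
  change (Rabs (f (a, b) - l) < d) in Hb. unfold f in Hb; simpl in Hb.
  replace (l - RInt h (- N) N) with ((RInt h a b - RInt h (- N) N) - (RInt h a b - l)) in Hlt by ring.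
  pose proof (abs_sub_le (RInt h a b - RInt h (- N) N) (RInt h a b - l)).
  unfold d in Hb; simpl in Hb.
  replace (l - RInt h (- N) N) with ((RInt h a b - RInt h (- N) N) - (RInt h a b - l)) in Hb by ring.
  lra.
Qed.

Lemma cplus {U : UniformSpace} (f g : U -> R) x : continuous f x -> continuous g x -> continuous (fun y => f y + g y) x.
Proof. intros; apply (continuous_plus (V := R_NormedModule) f g); auto. Qed.
Lemma cmult {U : UniformSpace} (f g : U -> R) x : continuous f x -> continuous g x -> continuous (fun y => f y * g y) x.
Proof. intros; apply (continuous_mult (K := R_AbsRing) f g); auto. Qed.
Lemma cminus {U : UniformSpace} (f g : U -> R) x : continuous f x -> continuous g x -> continuous (fun y => f y - g y) x.
Proof. intros; apply (continuous_minus (V := R_NormedModule) f g); auto. Qed.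
Lemma cconst {U : UniformSpace} (c : R) (x : U) : continuous (fun _ => c) x.
Proof. apply continuous_const. Qed.
Lemma cpow2 {U : UniformSpace} (f : U -> R) x : continuous f x -> continuous (fun y => f y ^ 2) x.
Proof. intros H. apply (continuous_ext (T := U) (U := R_UniformSpace) (fun y => f y * f y)). intros y. simpl. ring. apply cmult; auto. Qed.

Lemma decayb_mult f g A B : decayb f A -> decayb g B -> decayb (fun x => f x * g x) (A * B).
Proof.
  intros Hf Hg x. pose proof (decayb_K _ _ Hf). pose proof (decayb_K _ _ Hg).
  assert (Hp : 1 <= 1 + x ^ 2) by nra.
  rewrite Rabs_mult. eapply Rle_trans. apply Rmult_le_compat; try apply Rabs_pos; [apply Hf|apply Hg].
  assert (B / (1 + x ^ 2) <= B).
  { unfold Rdiv. rewrite <- (Rmult_1_r B) at 2. apply Rmult_le_compat_l; auto.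
    rewrite <- Rinv_1. apply Rinv_le_contravar; lra. }
  assert (0 <= A / (1 + x ^ 2)) by (apply Rdiv_le_0_compat; lra).
  replace (A * B / (1 + x ^ 2)) with (A / (1 + x ^ 2) * B) by (field; lra).
  apply Rmult_le_compat_l; auto.
Qed.

Lemma decayb_sq f A : decayb f A -> decayb (fun x => f x ^ 2) (A * A).
Proof.
  intros H. eapply (decayb_mult f f A A) in H; [|exact H].
  intros x. rewrite <- (Rsqr_pow2 (f x)). apply H.
Qed.

Lemma decayb_plus f g A B : decayb f A -> decayb g B -> decayb (fun x => f x + g x) (A + B).
Proof.
  intros Hf Hg x. eapply Rle_trans. apply Rabs_triang.
  replace ((A + B) / (1 + x ^ 2)) with (A / (1 + x ^ 2) + B / (1 + x ^ 2)) by (field; nra).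
  apply Rplus_le_compat; auto.
Qed.

Lemma decayb_scal c f A : decayb f A -> decayb (fun x => c * f x) (Rabs c * A).
Proof.
  intros Hf x. rewrite Rabs_mult. unfold Rdiv. rewrite Rmult_assoc.
  apply Rmult_le_compat_l. apply Rabs_pos. apply Hf.
Qed.

Lemma decayb_le f A B : decayb f A -> A <= B -> decayb f B.
Proof.
  intros Hf HAB x. eapply Rle_trans. apply Hf. unfold Rdiv. apply Rmult_le_compat_r; auto.
  left; apply Rinv_0_lt_compat; nra.
Qed.

Lemma lim_le X Y Z N0 : (forall N, N0 < N -> 0 < N -> X <= Y + Z / N) -> X <= Y.
Proof.
  intros H. destruct (Rle_or_lt X Y) as [|Hlt]; auto. exfalso.
  set (N := Rmax (Rmax (N0 + 1) 1) ((Rabs Z + 1) / (X - Y))).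
  assert (H1 : N0 + 1 <= N) by (unfold N; eapply Rle_trans; [apply Rmax_l|apply Rmax_l]).
  assert (H2 : 1 <= N) by (unfold N; eapply Rle_trans; [apply Rmax_r|apply Rmax_l]).
  assert (H3 : (Rabs Z + 1) / (X - Y) <= N) by (unfold N; apply Rmax_r).
  specialize (H N ltac:(lra) ltac:(lra)).
  assert (Z / N <= Rabs Z / N).
  { unfold Rdiv. apply Rmult_le_compat_r. left; apply Rinv_0_lt_compat; lra. apply Rle_abs. }
  assert (Rabs Z / N < X - Y).
  { apply (Rmult_lt_reg_r N). lra. unfold Rdiv. rewrite Rmult_assoc, Rinv_l by lra.
    apply (Rmult_le_compat_l (X - Y)) in H3; [|lra].
    replace ((X - Y) * ((Rabs Z + 1) / (X - Y))) with (Rabs Z + 1) in H3 by (field; lra). lra. }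
  lra.
Qed.

Lemma Rint_ge0 h K : (forall x, continuous h x) -> decayb h K -> (forall x, 0 <= h x) -> 0 <= Rint h.
Proof.
  intros Hc Hd Hp. destruct (tail h K Hc Hd) as [_ Ht].
  apply (lim_le _ _ (2 * K) 0). intros N _ HN.
  specialize (Ht N HN).
  assert (0 <= RInt h (- N) N) by (apply RInt_ge_0; [lra| apply cont_ex_RInt; auto| auto]).
  apply Rabs_le_between in Ht. lra.
Qed.

Lemma der_mul (f g : R -> R) x df dg : is_derive f x df -> is_derive g x dg ->
  is_derive (fun y => f y * g y) x (df * g x + f x * dg).
Proof.
  intros Hf Hg. pose proof (is_derive_mult f g x df dg Hf Hg) as H.
  apply H. intros; apply Rmult_comm.
Qed.

Lemma der_sq (f : R -> R) x df : is_derive f x df -> is_derive (fun y => f y ^ 2) x (2 * f x * df).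
Proof.
  intros Hf. pose proof (der_mul f f x df df Hf Hf) as H.
  eapply is_derive_ext. 2: replace (2 * f x * df) with (df * f x + f x * df) by ring; exact H.
  intros; simpl; ring.
Qed.

Lemma sup_bound (f g : R -> R) A B w :
  (forall x, is_derive f x (g x)) -> (forall x, continuous g x) ->
  decayb f A -> decayb g B -> 0 < w ->
  forall x, f x ^ 2 <= Rint (fun y => f y ^ 2) / w + w * Rint (fun y => g y ^ 2).
Proof.
  intros Hd Hgc Hf Hg Hw x.
  assert (Hfc : forall x, continuous f x) by (intros; apply (ex_derive_continuous f); eexists; apply Hd).
  pose proof (decayb_K _ _ Hf) as HA.
  assert (Hf2c : forall x, continuous (fun y => f y ^ 2) x) by (intros; apply cpow2; auto).
  assert (Hg2c : forall x, continuous (fun y => g y ^ 2) x) by (intros; apply cpow2; auto).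
  destruct (tail (fun y : R => f y ^ 2) _ Hf2c (decayb_sq f A Hf)) as [_ T1].
  destruct (tail (fun y : R => g y ^ 2) _ Hg2c (decayb_sq g B Hg)) as [_ T2].
  set (h := fun y => f y ^ 2 / w + w * g y ^ 2).
  assert (Hhc : forall y, continuous h y).
  { intros y. unfold h. apply cplus. apply cmult; [apply cpow2; auto| apply cconst].
    apply cmult; [apply cconst| apply cpow2; auto]. }
  apply (lim_le _ _ (A * A + 2 * (A * A) / w + w * (2 * (B * B))) (Rabs x)).
  intros N HN HN0.
  assert (Hx : - N < x < N) by (pose proof (Rle_abs x); pose proof (Rle_abs (- x)); rewrite Rabs_Ropp in *; lra).
  assert (E1 : is_RInt (fun y => 2 * f y * g y) (- N) x (f x ^ 2 - f (- N) ^ 2)).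
  { apply (is_RInt_derive (V := R_CompleteNormedModule) (fun y => f y ^ 2) (fun y => 2 * f y * g y)).
    - intros y _. apply der_sq. apply Hd.
    - intros y _. apply cmult; [apply cmult; [apply cconst|auto]|auto]. }
  apply (is_RInt_unique (V := R_CompleteNormedModule)) in E1.
  assert (I1 : RInt (fun y => 2 * f y * g y) (- N) x <= RInt h (- N) x).
  { apply RInt_le. lra. apply cont_ex_RInt; intros; apply cmult; [apply cmult; [apply cconst|auto]|auto].
    apply cont_ex_RInt; auto.
    intros y _. unfold h.
    assert (0 <= (f y - w * g y) ^ 2 / w) by (apply Rdiv_le_0_compat; [apply pow2_ge_0 | lra]).
    replace (f y ^ 2 / w + w * g y ^ 2) with (2 * f y * g y + (f y - w * g y) ^ 2 / w) by (field; lra).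
    lra. }
  assert (I2 : RInt h (- N) x <= RInt h (- N) N).
  { rewrite <- (RInt_Chasles (V := R_CompleteNormedModule) h (- N) x N) by (apply cont_ex_RInt; auto).
    assert (0 <= RInt h x N).
    { apply RInt_ge_0. lra. apply cont_ex_RInt; auto. intros y _. unfold h.
      assert (0 <= f y ^ 2 / w) by (apply Rdiv_le_0_compat; [apply pow2_ge_0 | lra]). nra. }
    unfold plus; simpl. lra. }
  assert (I3 : RInt h (- N) N = RInt (fun y => f y ^ 2) (- N) N / w + w * RInt (fun y => g y ^ 2) (- N) N).
  { unfold h. rewrite (RInt_plus (V := R_CompleteNormedModule) (fun y => f y ^ 2 / w) (fun y => w * g y ^ 2))
      by (apply cont_ex_RInt; intros; apply cmult; auto; apply cconst).
    unfold plus; simpl.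
    rewrite (RInt_ext (V := R_CompleteNormedModule) (fun y => f y ^ 2 / w) (fun y => scal (/ w) (f y ^ 2))) by (intros; unfold scal; simpl; unfold mult; simpl; unfold Rdiv; ring).
    rewrite (RInt_ext (V := R_CompleteNormedModule) (fun y => w * g y ^ 2) (fun y => scal w (g y ^ 2))) by (intros; reflexivity).
    rewrite (RInt_scal (V := R_CompleteNormedModule) (fun y => f y ^ 2)) by (apply cont_ex_RInt; auto).
    rewrite (RInt_scal (V := R_CompleteNormedModule) (fun y => g y ^ 2)) by (apply cont_ex_RInt; auto).
    unfold scal; simpl; unfold mult; simpl. unfold Rdiv. ring. }
  specialize (T1 N HN0). specialize (T2 N HN0).
  apply Rabs_le_between in T1. apply Rabs_le_between in T2.
  assert (Hfn : f (- N) ^ 2 <= A * A / N).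
  { specialize (Hf (- N)).
    assert (1 <= 1 + (- N) ^ 2) by nra.
    assert (A / (1 + (- N) ^ 2) <= A / N).
    { unfold Rdiv. apply Rmult_le_compat_l; auto. apply Rinv_le_contravar; nra. }
    assert (A / (1 + (- N) ^ 2) <= A).
    { unfold Rdiv. rewrite <- (Rmult_1_r A) at 2. apply Rmult_le_compat_l; auto.
      rewrite <- Rinv_1. apply Rinv_le_contravar; lra. }
    assert (Rabs (f (- N)) <= A / N) by lra.
    assert (Rabs (f (- N)) <= A) by lra.
    replace (f (- N) ^ 2) with (Rabs (f (- N)) * Rabs (f (- N))) by (rewrite <- Rabs_mult; rewrite Rabs_pos_eq; [ring| nra]).
    replace (A * A / N) with (A * (A / N)) by (field; lra).
    apply Rmult_le_compat; auto; apply Rabs_pos. }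
  assert (D1 : RInt (fun y => f y ^ 2) (- N) N / w <= (Rint (fun y => f y ^ 2) + 2 * (A * A) / N) / w).
  { apply (Rmult_le_compat_r (/ w)). left; apply Rinv_0_lt_compat; auto. lra. }
  assert (D2 : w * RInt (fun y => g y ^ 2) (- N) N <= w * (Rint (fun y => g y ^ 2) + 2 * (B * B) / N)).
  { apply Rmult_le_compat_l; lra. }
  replace ((A * A + 2 * (A * A) / w + w * (2 * (B * B))) / N) with
    (A * A / N + (2 * (A * A) / N) / w + w * (2 * (B * B) / N)) by (field; lra).
  assert (E2 : (Rint (fun y => f y ^ 2) + 2 * (A * A) / N) / w = Rint (fun y => f y ^ 2) / w + 2 * (A * A) / N / w) by (field; lra).
  lra.
Qed.

Lemma unif_cont (F : R -> R) (I : R -> R -> R) C :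
  (forall N, 0 < N -> forall s, continuous (I N) s) ->
  (forall N s, 0 < N -> Rabs (F s - I N s) <= C / N) -> forall s, continuous F s.
Proof.
  intros HI HF s.
  apply (proj2 (filterlim_locally (F := locally s) F (F s))).
  intros eps.
  assert (HC : 0 <= C). { specialize (HF 1 s ltac:(lra)). pose proof (Rabs_pos (F s - I 1 s)). unfold Rdiv in HF. rewrite Rinv_1 in HF. lra. }
  set (N := 3 * (C + 1) / eps).
  assert (HN : 0 < N) by (unfold N; apply Rdiv_lt_0_compat; [lra|apply cond_pos]).
  assert (HCN : C / N < eps / 3).
  { unfold N. pose proof (cond_pos eps).
    replace (C / (3 * (C + 1) / eps)) with (eps / 3 * (C / (C + 1))) by (field; lra).
    rewrite <- (Rmult_1_r (eps / 3)) at 2. apply Rmult_lt_compat_l. lra.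
    replace (C / (C + 1)) with (1 - 1 / (C + 1)) by (field; lra).
    assert (0 < 1 / (C + 1)) by (apply Rdiv_lt_0_compat; lra). lra. }
  assert (He3 : 0 < eps / 3) by (pose proof (cond_pos eps); lra).
  pose proof (proj1 (filterlim_locally (F := locally s) (I N) (I N s)) (HI N HN s) (mkposreal _ He3)) as Hl.
  eapply filter_imp; [|exact Hl]. intros y Hy.
  change (Rabs (I N y - I N s) < eps / 3) in Hy.
  change (Rabs (F y - F s) < eps).
  pose proof (HF N y HN). pose proof (HF N s HN).
  replace (F y - F s) with ((F y - I N y) + (I N y - I N s) - (F s - I N s)) by ring.
  eapply Rle_lt_trans. apply abs_sub_le.
  pose proof (Rabs_triang (F y - I N y) (I N y - I N s)). lra.
Qed.
Lemma G_gen (a0 a1 a2 q p3 p3x : R -> R) d0 d1 d2 dq dp3 dp3x x b e :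
  is_derive a0 x d0 -> is_derive a1 x d1 -> is_derive a2 x d2 -> is_derive q x dq ->
  is_derive p3 x dp3 -> is_derive p3x x dp3x ->
  is_derive (fun y => -(4/3) * a0 y ^ 3 - 2 * b * (a0 y * a2 y) + b * a1 y ^ 2 + 2 * b * (a0 y * q y)
     - 2 * b ^ 2 * (a0 y * p3x y - a1 y * p3 y) + 2 * e * (a0 y * a1 y)) x
   (-(4/3) * (3 * a0 x ^ 2 * d0) - 2 * b * (d0 * a2 x + a0 x * d2) + b * (2 * a1 x * d1)
    + 2 * b * (d0 * q x + a0 x * dq) - 2 * b ^ 2 * (d0 * p3x x + a0 x * dp3x - (d1 * p3 x + a1 x * dp3))
    + 2 * e * (d0 * a1 x + a0 x * d1)).
Proof.
  intros H0 H1 H2 H3 H4 H5.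
  apply is_derive_unique in H0 as E0. apply is_derive_unique in H1 as E1.
  apply is_derive_unique in H2 as E2. apply is_derive_unique in H3 as E3.
  apply is_derive_unique in H4 as E4. apply is_derive_unique in H5 as E5.
  auto_derive.
  - repeat split; eexists; eauto.
  - repeat match goal with |- context [Derive (fun y => ?f y) x] => change (Derive (fun y => f y) x) with (Derive f x) end.
    rewrite E0, E1, E2, E3, E4, E5. ring.
Qed.

Lemma E_gen (f0 f1 f2 : R -> R) d0 d1 d2 s b :
  is_derive f0 s d0 -> is_derive f1 s d1 -> is_derive f2 s d2 ->
  is_derive (fun z => f0 z ^ 2 + b * f1 z ^ 2 + b ^ 2 * f2 z ^ 2) s
    (2 * f0 s * d0 + b * (2 * f1 s * d1) + b ^ 2 * (2 * f2 s * d2)).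
Proof.
  intros H0 H1 H2.
  apply is_derive_unique in H0 as E0. apply is_derive_unique in H1 as E1.
  apply is_derive_unique in H2 as E2.
  auto_derive.
  - repeat split; eexists; eauto.
  - repeat match goal with |- context [Derive (fun y => ?f y) s] => change (Derive (fun y => f y) s) with (Derive f s) end.
    rewrite E0, E1, E2. ring.
Qed.

Lemma sm_derx u l t x : smooth2 u -> is_derive (fun y => pd l u t y) x (pd (false :: l) u t x).
Proof. intros H. destruct (H l t x) as [_ [H2 _]]. apply (Derive_correct _ _ H2). Qed.

Lemma sm_ders u l t x : smooth2 u -> is_derive (fun s => pd l u s x) t (pd (true :: l) u t x).
Proof. intros H. destruct (H l t x) as [H1 _]. apply (Derive_correct _ _ H1). Qed.

Lemma sm_contx u l t x : smooth2 u -> continuous (fun y => pd l u t y) x.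
Proof. intros H. apply (ex_derive_continuous (fun y => pd l u t y)). eexists. apply sm_derx; auto. Qed.

Lemma sm_conts u l t x : smooth2 u -> continuous (fun s => pd l u s x) t.
Proof. intros H. apply (ex_derive_continuous (fun s => pd l u s x)). eexists. apply sm_ders; auto. Qed.

Lemma sm_c2d u l t x : smooth2 u -> continuity_2d_pt (fun s y => pd l u s y) t x.
Proof. intros H. apply continuity_2d_pt_filterlim. destruct (H l t x) as [_ [_ H3]]. exact H3. Qed.

Lemma schwarz u l t x : smooth2 u -> pd (false :: true :: l) u t x = pd (true :: false :: l) u t x.
Proof.
  intros H. symmetry.
  apply (Schwarz (pd l u) t x).
  - exists (mkposreal 1 Rlt_0_1). intros a b _ _.
    destruct (H l a b) as [H1 [H2 _]].
    destruct (H (false :: l) a b) as [H3 _].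
    destruct (H (true :: l) a b) as [_ [H4 _]].
    repeat split; auto.
  - apply (sm_c2d u (true :: false :: l)); auto.
  - apply (sm_c2d u (false :: true :: l)); auto.
Qed.

Lemma schwarz5 u t x : smooth2 u ->
  pd (false :: false :: true :: false :: false :: nil) u t x = pd (true :: false :: false :: false :: false :: nil) u t x.
Proof.
  intros H.
  assert (Hf : pd (false :: true :: false :: false :: nil) u = pd (true :: false :: false :: false :: nil) u).
  { apply functional_extensionality; intros a; apply functional_extensionality; intros b.
    apply (schwarz u (false :: false :: nil)); auto. }
  change (dx (pd (false :: true :: false :: false :: nil) u) t x = pd (true :: false :: false :: false :: false :: nil) u t x).
  rewrite Hf. apply (schwarz u (false :: false :: false :: nil)); auto.
Qed.

Notation L0 := (@nil bool).
Notation Lx := (false :: nil).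
Notation Lxx := (false :: false :: nil).
Notation Lxxx := (false :: false :: false :: nil).
Notation Lt := (true :: nil).
Notation Ltx := (true :: false :: nil).
Notation Lxtx := (false :: true :: false :: nil).
Notation Ltxx := (true :: false :: false :: nil).
Notation Lxtxx := (false :: true :: false :: false :: nil).
Notation Lxxtxx := (false :: false :: true :: false :: false :: nil).
Notation Ltxxxx := (true :: false :: false :: false :: false :: nil).

Definition en u b s x := pd L0 u s x ^ 2 + b * pd Lx u s x ^ 2 + b ^ 2 * pd Lxx u s x ^ 2.
Definition ent u b s x := 2 * pd L0 u s x * pd Lt u s x + b * (2 * pd Lx u s x * pd Ltx u s x)
  + b ^ 2 * (2 * pd Lxx u s x * pd Ltxx u s x).

Lemma en_ders u b s x : smooth2 u -> is_derive (fun z => en u b z x) s (ent u b s x).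
Proof.
  intros H. unfold en, ent.
  apply (E_gen (fun z => pd L0 u z x) (fun z => pd Lx u z x) (fun z => pd Lxx u z x)); apply sm_ders; auto.
Qed.

Definition Gf u b e s x :=
  -(4/3) * pd L0 u s x ^ 3 - 2 * b * (pd L0 u s x * pd Lxx u s x) + b * pd Lx u s x ^ 2
  + 2 * b * (pd L0 u s x * pd Ltx u s x)
  - 2 * b ^ 2 * (pd L0 u s x * pd Lxtxx u s x - pd Lx u s x * pd Ltxx u s x)
  + 2 * e * (pd L0 u s x * pd Lx u s x).

Definition DG u b e s x :=
  let a0 := pd L0 u s x in let a1 := pd Lx u s x in let a2 := pd Lxx u s x in
  let q := pd Ltx u s x in let p3 := pd Ltxx u s x in let p3x := pd Lxtxx u s x in
  let d0 := a1 in let d1 := a2 in let d2 := pd Lxxx u s x in let dq := pd Lxtx u s x in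
  let dp3 := p3x in let dp3x := pd Lxxtxx u s x in
    (-(4/3) * (3 * a0 ^ 2 * d0) - 2 * b * (d0 * a2 + a0 * d2) + b * (2 * a1 * d1)
    + 2 * b * (d0 * q + a0 * dq) - 2 * b ^ 2 * (d0 * p3x + a0 * dp3x - (d1 * p3 + a1 * dp3))
    + 2 * e * (d0 * a1 + a0 * d1)).

Lemma Gf_derx u b e s x : smooth2 u -> is_derive (fun y => Gf u b e s y) x (DG u b e s x).
Proof.
  intros H. unfold Gf, DG.
  apply (G_gen (fun y => pd L0 u s y) (fun y => pd Lx u s y) (fun y => pd Lxx u s y)
     (fun y => pd Ltx u s y) (fun y => pd Ltxx u s y) (fun y => pd Lxtxx u s y)); apply sm_derx; auto.
Qed.

Definition PDEat u b e s x :=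
  dt u s x + dx (fun s y => (u s y) ^ 2) s x + b * pd (false :: false :: false :: nil) u s x
       - b * pd (true :: false :: false :: nil) u s x
       + b ^ 2 * pd (true :: false :: false :: false :: false :: nil) u s x
       = e * pd (false :: false :: nil) u s x.

Lemma ent_eq u b e s x : smooth2 u -> PDEat u b e s x ->
  ent u b s x = DG u b e s x - 2 * e * pd Lx u s x ^ 2.
Proof.
  intros H P. unfold PDEat in P.
  assert (Hsq : dx (fun s y => (u s y) ^ 2) s x = 2 * pd L0 u s x * pd Lx u s x).
  { unfold dx. apply is_derive_unique. apply (der_sq (fun y => pd L0 u s y)). apply sm_derx; auto. }
  rewrite Hsq in P.
  change (dt u s x) with (pd Lt u s x) in P.
  pose proof (schwarz u Lx s x H) as S1.
  pose proof (schwarz5 u s x H) as S2.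
  unfold ent, DG. cbv zeta. rewrite S1, S2.
  replace (pd Lt u s x) with (e * pd Lxx u s x - 2 * pd L0 u s x * pd Lx u s x - b * pd Lxxx u s x
     + b * pd Ltxx u s x - b ^ 2 * pd Ltxxxx u s x) by lra.
  field.
Qed.

Lemma cpown {U : UniformSpace} (f : U -> R) n x : continuous f x -> continuous (fun y => f y ^ n) x.
Proof.
  intros H. induction n.
  - simpl. apply cconst.
  - simpl. apply cmult; auto.
Qed.

Ltac ctac H := repeat match goal with
  | |- continuous (fun y => pd _ _ _ y) _ => apply (sm_contx _ _ _ _ H)
  | |- continuous (pd _ _ _) _ => apply (sm_contx _ _ _ _ H)
  | |- continuous (fun z => pd _ _ z _) _ => apply (sm_conts _ _ _ _ H)
  | |- continuous (fun _ => _ + _) _ => apply cplus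
  | |- continuous (fun _ => _ - _) _ => apply cminus
  | |- continuous (fun _ => _ * _) _ => apply cmult
  | |- continuous (fun _ => _ ^ _) _ => apply cpown
  | |- continuous (fun _ => _) _ => apply cconst
  end.

Lemma space_int u b e s N : smooth2 u -> (forall x, PDEat u b e s x) ->
  RInt (fun x => ent u b s x) (- N) N =
  Gf u b e s N - Gf u b e s (- N) - 2 * e * RInt (fun x => pd Lx u s x ^ 2) (- N) N.
Proof.
  intros H P.
  rewrite (RInt_ext (V := R_CompleteNormedModule) _ (fun x => DG u b e s x - 2 * e * pd Lx u s x ^ 2))
    by (intros; apply ent_eq; auto).
  assert (HDc : forall x, continuous (fun y => DG u b e s y) x).
  { intros x. unfold DG; cbv zeta. ctac H. }
  rewrite (RInt_minus (V := R_CompleteNormedModule) (fun x => DG u b e s x) (fun x => 2 * e * pd Lx u s x ^ 2)).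
  2: apply cont_ex_RInt; auto.
  2: apply cont_ex_RInt; intros; ctac H.
  assert (I1 : is_RInt (fun x => DG u b e s x) (- N) N (Gf u b e s N - Gf u b e s (- N))).
  { apply (is_RInt_derive (V := R_CompleteNormedModule) (fun y => Gf u b e s y)).
    - intros; apply Gf_derx; auto.
    - intros; auto. }
  rewrite (is_RInt_unique (V := R_CompleteNormedModule) _ _ _ _ I1).
  rewrite (RInt_ext (V := R_CompleteNormedModule) (fun x => 2 * e * pd Lx u s x ^ 2) (fun x => scal (2 * e) (pd Lx u s x ^ 2))) by (intros; reflexivity).
  rewrite (RInt_scal (V := R_CompleteNormedModule) (fun x => pd Lx u s x ^ 2)) by (apply cont_ex_RInt; intros; ctac H).
  reflexivity.
Qed.


Lemma param_der (f df : R -> R -> R) a b s :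
  (forall z x, is_derive (fun w => f w x) z (df z x)) ->
  (forall z x, continuity_2d_pt df z x) ->
  (forall z x, continuous (fun y => f z y) x) ->
  is_derive (fun z => RInt (fun x => f z x) a b) s (RInt (fun x => df s x) a b).
Proof.
  intros Hd Hc Hx.
  pose proof (is_derive_RInt_param f a b s) as P.
  rewrite (RInt_ext (V := R_CompleteNormedModule) (fun x => df s x) (fun t => Derive (fun u0 => f u0 t) s)).
  2: { intros x _. symmetry. apply is_derive_unique. apply Hd. }
  apply P.
  - apply filter_forall. intros z t _. eexists. apply Hd.
  - intros t _. apply (continuity_2d_pt_ext df). 2: apply Hc.
    intros z v. symmetry. apply is_derive_unique. apply Hd.
  - apply filter_forall. intros z. apply cont_ex_RInt. auto.
Qed.

Lemma c2d_pow f n x y : continuity_2d_pt f x y -> continuity_2d_pt (fun a b => f a b ^ n) x y.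
Proof.
  intros H. induction n.
  - simpl. apply continuity_2d_pt_const.
  - simpl. apply continuity_2d_pt_mult; auto.
Qed.

Ltac c2tac H := repeat match goal with
  | |- continuity_2d_pt (fun a b => pd _ _ a b) _ _ => apply (sm_c2d _ _ _ _ H)
  | |- continuity_2d_pt (pd _ _) _ _ => apply (sm_c2d _ _ _ _ H)
  | |- continuity_2d_pt (fun _ _ => _ + _) _ _ => apply continuity_2d_pt_plus
  | |- continuity_2d_pt (fun _ _ => _ - _) _ _ => apply continuity_2d_pt_minus
  | |- continuity_2d_pt (fun _ _ => _ * _) _ _ => apply continuity_2d_pt_mult
  | |- continuity_2d_pt (fun _ _ => _ ^ _) _ _ => apply c2d_pow
  | |- continuity_2d_pt (fun _ _ => _) _ _ => apply continuity_2d_pt_const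
  end.

Lemma HN_der u b N s : smooth2 u ->
  is_derive (fun z => RInt (fun x => en u b z x) (- N) N) s (RInt (fun x => ent u b s x) (- N) N).
Proof.
  intros H. apply param_der.
  - intros; apply en_ders; auto.
  - intros. unfold ent. c2tac H.
  - intros. unfold en. ctac H.
Qed.

Lemma IN_der u N s : smooth2 u ->
  is_derive (fun z => RInt (fun x => pd Lx u z x ^ 2) (- N) N) s
    (RInt (fun x => 2 * pd Lx u s x * pd Ltx u s x) (- N) N).
Proof.
  intros H. apply (param_der (fun z x => pd Lx u z x ^ 2) (fun z x => 2 * pd Lx u z x * pd Ltx u z x)).
  - intros; apply (der_sq (fun w => pd Lx u w x)). apply sm_ders; auto.
  - intros. c2tac H.
  - intros. ctac H.
Qed.

Lemma IN_cont u N s : smooth2 u -> continuous (fun z => RInt (fun x => pd Lx u z x ^ 2) (- N) N) s.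
Proof. intros H. apply (ex_derive_continuous (fun z => RInt (fun x => pd Lx u z x ^ 2) (- N) N)). eexists. apply IN_der; auto. Qed.

Lemma Gf_conts u b e N s : smooth2 u -> continuous (fun z => Gf u b e z N) s.
Proof. intros H. unfold Gf. ctac H. Qed.

Lemma time_id u b e N t : smooth2 u -> 0 <= t -> (forall s x, 0 <= s -> PDEat u b e s x) ->
  RInt (fun x => en u b t x) (- N) N - RInt (fun x => en u b 0 x) (- N) N =
  RInt (fun s => Gf u b e s N - Gf u b e s (- N)) 0 t
  - 2 * e * RInt (fun s => RInt (fun x => pd Lx u s x ^ 2) (- N) N) 0 t.
Proof.
  intros H Ht P.
  assert (I : is_RInt (fun s => (Gf u b e s N - Gf u b e s (- N)) - 2 * e * RInt (fun x => pd Lx u s x ^ 2) (- N) N) 0 t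
     (minus (RInt (fun x => en u b t x) (- N) N) (RInt (fun x => en u b 0 x) (- N) N))).
  { apply (is_RInt_derive (V := R_CompleteNormedModule) (fun z => RInt (fun x => en u b z x) (- N) N)).
    - intros x Hx. rewrite Rmin_left in Hx by lra.
      rewrite <- (space_int u b e x N H (fun y => P x y ltac:(lra))). apply HN_der; auto.
    - intros x _. apply cminus. apply cminus; apply Gf_conts; auto.
      apply cmult. apply cconst. apply IN_cont; auto. }
  apply (is_RInt_unique (V := R_CompleteNormedModule)) in I.
  change (minus ?a ?b) with (a - b) in I. rewrite <- I.
  assert (C1 : forall z, continuous (fun s => Gf u b e s N - Gf u b e s (- N)) z).
  { intros; apply cminus; apply Gf_conts; auto. }
  assert (C2 : forall z, continuous (fun s => RInt (fun x => pd Lx u s x ^ 2) (- N) N) z).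
  { intros; apply IN_cont; auto. }
  rewrite (RInt_minus (V := R_CompleteNormedModule) (fun s => Gf u b e s N - Gf u b e s (- N))
     (fun s => 2 * e * RInt (fun x => pd Lx u s x ^ 2) (- N) N)).
  2: apply cont_ex_RInt; auto.
  2: apply cont_ex_RInt; intros; apply cmult; [apply cconst| auto].
  rewrite (RInt_ext (V := R_CompleteNormedModule) (fun s => 2 * e * RInt (fun x => pd Lx u s x ^ 2) (- N) N)
     (fun s => scal (2 * e) (RInt (fun x => pd Lx u s x ^ 2) (- N) N))) by (intros; reflexivity).
  rewrite (RInt_scal (V := R_CompleteNormedModule) (fun s => RInt (fun x => pd Lx u s x ^ 2) (- N) N)) by (apply cont_ex_RInt; auto).
  reflexivity.
Qed.


Lemma decayb_minus f g A B : decayb f A -> decayb g B -> decayb (fun x => f x - g x) (A + B).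
Proof.
  intros Hf Hg. assert (Hg' : decayb (fun x => - g x) B) by (intros x; rewrite Rabs_Ropp; apply Hg).
  pose proof (decayb_plus f (fun x => - g x) A B Hf Hg') as H. intros x. apply H.
Qed.

Lemma decayb_pow f A n : decayb f A -> decayb (fun x => f x ^ S n) (A ^ S n).
Proof.
  intros H. induction n.
  - intros x. replace (f x ^ 1) with (f x) by ring. replace (A ^ 1) with A by ring. apply H.
  - intros x. change (Rabs (f x * f x ^ S n) <= A * A ^ S n / (1 + x ^ 2)).
    apply (decayb_mult f (fun x => f x ^ S n) A (A ^ S n) H IHn).
Qed.

Lemma cabs {U : UniformSpace} (f : U -> R) x : continuous f x -> continuous (fun y => Rabs (f y)) x.
Proof. intros H. apply (continuous_comp f Rabs). auto. apply continuous_Rabs. Qed.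

Definition cl (t s : R) := (0 + (t + s - Rabs (t - s)) / 2 + Rabs (0 - (t + s - Rabs (t - s)) / 2)) / 2.

Lemma cl_prop t s : 0 <= t -> 0 <= cl t s <= t /\ (0 <= s <= t -> cl t s = s).
Proof.
  intros Ht. unfold cl.
  destruct (Rcase_abs (t - s)) as [H1|H1].
  - rewrite (Rabs_left _ H1).
    destruct (Rcase_abs (0 - (t + s - - (t - s)) / 2)) as [H2|H2].
    + rewrite (Rabs_left _ H2). split; [lra|]. intros; lra.
    + rewrite (Rabs_right _ H2). split; [lra|]. intros; lra.
  - rewrite (Rabs_right _ H1).
    destruct (Rcase_abs (0 - (t + s - (t - s)) / 2)) as [H2|H2].
    + rewrite (Rabs_left _ H2). split; [lra|]. intros; lra.
    + rewrite (Rabs_right _ H2). split; [lra|]. intros; lra.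
Qed.

Lemma cl_cont t s : continuous (cl t) s.
Proof.
  unfold cl.
  repeat match goal with
  | |- continuous (fun y => Rabs _) _ => apply cabs
  | |- continuous (fun y => y) _ => apply continuous_id
  | |- continuous (Rplus ?a) _ => apply (cplus (fun _ => a) (fun y => y)); [apply cconst | apply continuous_id]
  | |- continuous (Rminus ?a) _ => apply (cminus (fun _ => a) (fun y => y)); [apply cconst | apply continuous_id]
  | |- continuous (fun _ => _ + _) _ => apply cplus
  | |- continuous (fun _ => _ - _) _ => apply cminus
  | |- continuous (fun _ => _ / _) _ => apply cmult
  | |- continuous (fun _ => / _) _ => apply cconst
  | |- continuous (fun _ => _) _ => apply cconst
  end.
Qed.

Definition Ef u b s := L2sq (u s) + b * L2sq (dx u s) + b ^ 2 * L2sq (dx (dx u) s).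

Lemma en_split u b s N : smooth2 u -> RInt (fun x => en u b s x) (- N) N =
  RInt (fun x => pd L0 u s x ^ 2) (- N) N + b * RInt (fun x => pd Lx u s x ^ 2) (- N) N
  + b ^ 2 * RInt (fun x => pd Lxx u s x ^ 2) (- N) N.
Proof.
  intros H. unfold en.
  rewrite (RInt_plus (V := R_CompleteNormedModule) (fun x => pd L0 u s x ^ 2 + b * pd Lx u s x ^ 2) (fun x => b ^ 2 * pd Lxx u s x ^ 2))
    by (apply cont_ex_RInt; intros; ctac H).
  rewrite (RInt_plus (V := R_CompleteNormedModule) (fun x => pd L0 u s x ^ 2) (fun x => b * pd Lx u s x ^ 2))
    by (apply cont_ex_RInt; intros; ctac H).
  rewrite (RInt_ext (V := R_CompleteNormedModule) (fun x => b * pd Lx u s x ^ 2) (fun x => scal b (pd Lx u s x ^ 2))) by (intros; reflexivity).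
  rewrite (RInt_ext (V := R_CompleteNormedModule) (fun x => b ^ 2 * pd Lxx u s x ^ 2) (fun x => scal (b ^ 2) (pd Lxx u s x ^ 2))) by (intros; reflexivity).
  rewrite (RInt_scal (V := R_CompleteNormedModule) (fun x => pd Lx u s x ^ 2)) by (apply cont_ex_RInt; intros; ctac H).
  rewrite (RInt_scal (V := R_CompleteNormedModule) (fun x => pd Lxx u s x ^ 2)) by (apply cont_ex_RInt; intros; ctac H).
  reflexivity.
Qed.

Lemma tail_pd u s l M N : smooth2 u -> decayb (fun y => pd l u s y) M -> 0 < N ->
  Rabs (Rint (fun y => pd l u s y ^ 2) - RInt (fun y => pd l u s y ^ 2) (- N) N) <= 2 * (M * M) / N.
Proof.
  intros H Hd HN.
  assert (Hc : forall x, continuous (fun y => pd l u s y ^ 2) x) by (intros; ctac H).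
  destruct (tail (fun y => pd l u s y ^ 2) (M * M) Hc (decayb_sq _ _ Hd)) as [_ T].
  apply T; auto.
Qed.

Lemma Rint_pd_ge0 u s l M : smooth2 u -> decayb (fun y => pd l u s y) M ->
  0 <= Rint (fun y => pd l u s y ^ 2).
Proof.
  intros H Hd.
  apply (Rint_ge0 _ (M * M)). intros; ctac H. apply (decayb_sq _ _ Hd).
  intros; apply pow2_ge_0.
Qed.


Lemma decayb_at f K N : decayb f K -> 0 < N -> Rabs (f N) <= K / N /\ Rabs (f (- N)) <= K / N.
Proof.
  intros H HN. pose proof (decayb_K _ _ H) as HK.
  assert (K / (1 + N ^ 2) <= K / N).
  { unfold Rdiv. apply Rmult_le_compat_l; auto. apply Rinv_le_contravar; nra. }
  split.
  - eapply Rle_trans. apply H. lra.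
  - eapply Rle_trans. apply H. replace ((- N) ^ 2) with (N ^ 2) by ring. lra.
Qed.

Lemma comb3 A a B c C d al be ga b : 0 <= b -> Rabs (A - a) <= al -> Rabs (B - c) <= be ->
  Rabs (C - d) <= ga -> Rabs ((A + b * B + b ^ 2 * C) - (a + b * c + b ^ 2 * d)) <= al + b * be + b ^ 2 * ga.
Proof.
  intros Hb H1 H2 H3.
  replace ((A + b * B + b ^ 2 * C) - (a + b * c + b ^ 2 * d)) with ((A - a) + b * (B - c) + b ^ 2 * (C - d)) by ring.
  eapply Rle_trans. apply Rabs_triang. eapply Rle_trans. apply Rplus_le_compat_r. apply Rabs_triang.
  rewrite !Rabs_mult. rewrite (Rabs_pos_eq b Hb). rewrite (Rabs_pos_eq (b ^ 2)) by (apply pow_le; auto).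
  assert (b * Rabs (B - c) <= b * be) by (apply Rmult_le_compat_l; auto).
  assert (b ^ 2 * Rabs (C - d) <= b ^ 2 * ga) by (apply Rmult_le_compat_l; auto; apply pow_le; auto).
  lra.
Qed.

Ltac dtac D0 D1 D2 D3 D4 D5 s Hs := repeat match goal with
  | |- decayb (fun y => pd _ _ _ y) _ => first [apply (D0 s Hs) | apply (D1 s Hs) | apply (D2 s Hs) | apply (D3 s Hs) | apply (D4 s Hs) | apply (D5 s Hs)]
  | |- decayb (pd _ _ _) _ => first [apply (D0 s Hs) | apply (D1 s Hs) | apply (D2 s Hs) | apply (D3 s Hs) | apply (D4 s Hs) | apply (D5 s Hs)]
  | |- decayb (fun y => ?c * _) _ => eapply (decayb_scal c)
  | |- decayb (fun y => _ * _) _ => eapply decayb_mult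
  | |- decayb (fun y => _ + _) _ => eapply decayb_plus
  | |- decayb (fun y => _ - _) _ => eapply decayb_minus
  | |- decayb (fun y => _ ^ _) _ => eapply decayb_pow
  end.

Lemma energy u b e t : smooth2 u -> decays u -> 0 < b -> 0 < e -> 0 < t ->
  (forall s x, 0 <= s -> PDEat u b e s x) ->
  Ef u b t + 2 * e * RInt (fun s => L2sq (dx u s)) 0 t <= Ef u b 0 /\
  0 <= RInt (fun s => L2sq (dx u s)) 0 t.
Proof.
  intros H Hdec Hb He Ht P.
  destruct (Hdec L0 t ltac:(lra)) as [M0 HM0].
  destruct (Hdec Lx t ltac:(lra)) as [M1 HM1].
  destruct (Hdec Lxx t ltac:(lra)) as [M2 HM2].
  destruct (Hdec Ltx t ltac:(lra)) as [M3 HM3].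
  destruct (Hdec Ltxx t ltac:(lra)) as [M4 HM4].
  destruct (Hdec Lxtxx t ltac:(lra)) as [M5 HM5].
  assert (D0 : forall s, 0 <= s <= t -> decayb (fun y => pd L0 u s y) M0) by (intros s Hs x; apply HM0; auto).
  assert (D1 : forall s, 0 <= s <= t -> decayb (fun y => pd Lx u s y) M1) by (intros s Hs x; apply HM1; auto).
  assert (D2 : forall s, 0 <= s <= t -> decayb (fun y => pd Lxx u s y) M2) by (intros s Hs x; apply HM2; auto).
  assert (D3 : forall s, 0 <= s <= t -> decayb (fun y => pd Ltx u s y) M3) by (intros s Hs x; apply HM3; auto).
  assert (D4 : forall s, 0 <= s <= t -> decayb (fun y => pd Ltxx u s y) M4) by (intros s Hs x; apply HM4; auto).
  assert (D5 : forall s, 0 <= s <= t -> decayb (fun y => pd Lxtxx u s y) M5) by (intros s Hs x; apply HM5; auto).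
  assert (HG : exists KG, forall s, 0 <= s <= t -> decayb (fun y => Gf u b e s y) KG).
  { eexists. intros s Hs. unfold Gf. dtac D0 D1 D2 D3 D4 D5 s Hs. }
  destruct HG as [KG HG].
  pose proof (decayb_K _ _ (D1 0 ltac:(lra))) as HM1p.
  set (IN := fun N s => RInt (fun x => pd Lx u s x ^ 2) (- N) N).
  set (F := fun s => L2sq (dx u s)).
  assert (FI : forall N s, 0 < N -> 0 <= s <= t -> Rabs (F s - IN N s) <= 2 * (M1 * M1) / N).
  { intros N s HN Hs. unfold F, IN. change (L2sq (dx u s)) with (Rint (fun y => pd Lx u s y ^ 2)).
    apply tail_pd; auto. }
  assert (F0 : forall s, 0 <= s <= t -> 0 <= F s).
  { intros s Hs. unfold F. change (L2sq (dx u s)) with (Rint (fun y => pd Lx u s y ^ 2)).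
    apply (Rint_pd_ge0 u s Lx M1); auto. }
  set (Ft := fun s => F (cl t s)).
  assert (Ftc : forall s, continuous Ft s).
  { apply (unif_cont Ft (fun N s => IN N (cl t s)) (2 * (M1 * M1))).
    - intros N _ s. apply (continuous_comp (cl t) (IN N)). apply cl_cont. apply IN_cont; auto.
    - intros N s HN. unfold Ft. apply FI; auto. apply cl_prop; lra. }
  assert (EF : RInt F 0 t = RInt Ft 0 t).
  { apply RInt_ext. intros x Hx. rewrite Rmin_left in Hx by lra. rewrite Rmax_right in Hx by lra.
    unfold Ft. rewrite (proj2 (cl_prop t x ltac:(lra))) by lra. reflexivity. }
  change (RInt (fun s => L2sq (dx u s)) 0 t) with (RInt F 0 t). rewrite EF.
  assert (Ft0 : 0 <= RInt Ft 0 t).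
  { apply RInt_ge_0. lra. apply cont_ex_RInt; auto. intros x Hx. unfold Ft. apply F0. apply cl_prop; lra. }
  split; [| exact Ft0].
  assert (FIint : forall N, 0 < N -> Rabs (RInt (IN N) 0 t - RInt Ft 0 t) <= (t - 0) * (2 * (M1 * M1) / N)).
  { intros N HN.
    assert (INc : forall s, continuous (IN N) s) by (intros; apply IN_cont; auto).
    rewrite <- (RInt_minus (V := R_CompleteNormedModule) (IN N) Ft) by (apply cont_ex_RInt; auto).
    apply abs_RInt_le_const. lra. apply cont_ex_RInt. intros; apply cminus; auto.
    intros s Hs. unfold Ft. rewrite (proj2 (cl_prop t s ltac:(lra))) by lra.
    change (minus (IN N s) (F s)) with (IN N s - F s). rewrite Rabs_minus_sym. apply FI; auto. }
  set (T := 2 * (M0 * M0) + b * (2 * (M1 * M1)) + b ^ 2 * (2 * (M2 * M2))).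
  assert (ET : forall N s, 0 < N -> 0 <= s <= t -> Rabs (Ef u b s - RInt (fun x => en u b s x) (- N) N) <= T / N).
  { intros N s HN Hs. rewrite en_split by auto. unfold Ef.
    change (L2sq (u s)) with (Rint (fun y => pd L0 u s y ^ 2)).
    change (L2sq (dx u s)) with (Rint (fun y => pd Lx u s y ^ 2)).
    change (L2sq (dx (dx u) s)) with (Rint (fun y => pd Lxx u s y ^ 2)).
    replace (T / N) with (2 * (M0 * M0) / N + b * (2 * (M1 * M1) / N) + b ^ 2 * (2 * (M2 * M2) / N)) by (unfold T; field; lra).
    apply comb3; try lra; apply tail_pd; auto. }
  assert (BD : forall N, 0 < N -> Rabs (RInt (fun s => Gf u b e s N - Gf u b e s (- N)) 0 t) <= (t - 0) * (2 * KG / N)).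
  { intros N HN. apply abs_RInt_le_const. lra.
    apply cont_ex_RInt. intros; apply cminus; apply Gf_conts; auto.
    intros s Hs. destruct (decayb_at _ _ N (HG s Hs) HN) as [B1 B2].
    eapply Rle_trans. apply abs_sub_le. lra. }
  apply (lim_le _ _ (2 * T + t * (2 * KG) + 2 * e * (t * (2 * (M1 * M1)))) 0).
  intros N _ HN.
  pose proof (time_id u b e N t H ltac:(lra) P) as TI.
  pose proof (ET N t HN ltac:(lra)) as E1. pose proof (ET N 0 HN ltac:(lra)) as E2.
  pose proof (BD N HN) as B. pose proof (FIint N HN) as FI2.
  change (RInt (fun s => RInt (fun x => pd Lx u s x ^ 2) (- N) N) 0 t) with (RInt (IN N) 0 t) in TI.
  apply Rabs_le_between in E1. apply Rabs_le_between in E2. apply Rabs_le_between in B. apply Rabs_le_between in FI2.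
  assert (2 * e * (RInt Ft 0 t - RInt (IN N) 0 t) <= 2 * e * ((t - 0) * (2 * (M1 * M1) / N))).
  { apply Rmult_le_compat_l; lra. }
  replace ((2 * T + t * (2 * KG) + 2 * e * (t * (2 * (M1 * M1)))) / N) with
    (T / N + T / N + (t - 0) * (2 * KG / N) + 2 * e * ((t - 0) * (2 * (M1 * M1) / N))) by (field; lra).
  lra.
Qed.


Lemma rp14 b : 0 < b -> Rpower b (- (1 / 4)) * Rpower b (- (1 / 4)) = / sqrt b.
Proof.
  intros Hb. rewrite <- Rpower_plus. replace (- (1 / 4) + - (1 / 4)) with (- (/ 2)) by field.
  rewrite Rpower_Ropp, Rpower_sqrt; auto.
Qed.

Lemma rp34 b : 0 < b -> Rpower b (- (3 / 4)) * Rpower b (- (3 / 4)) = / (b * sqrt b).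
Proof.
  intros Hb. rewrite <- Rpower_plus. replace (- (3 / 4) + - (3 / 4)) with (- (1 + / 2)) by field.
  rewrite Rpower_Ropp, Rpower_plus, Rpower_sqrt, Rpower_1; auto.
Qed.

Lemma abs_from_sq x y : 0 <= y -> x ^ 2 <= y * y -> Rabs x <= y.
Proof.
  intros Hy H. destruct (Rle_or_lt (Rabs x) y) as [|Hl]; auto. exfalso.
  assert (x ^ 2 = Rabs x * Rabs x) by (rewrite <- Rabs_mult; rewrite Rabs_pos_eq; [ring| nra]).
  nra.
Qed.

Theorem lemma2p1 :
  forall C0 : R, 0 <= C0 ->
  exists C : R,
  forall (eps beta : R) (u0 : R -> R) (u : R -> R -> R),
    0 < eps -> 0 < beta ->
    smooth1 u0 ->
    (* bounds on the initial datum *)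
    L2sq u0 + L4pow4 u0 + (beta + eps ^ 2) * L2sq (Derive_n u0 1) <= C0 ->
    (beta * eps + beta * eps ^ 2 + beta ^ 2) * L2sq (Derive_n u0 2)
      + (beta ^ 2 * eps ^ 2 + beta ^ 3) * L2sq (Derive_n u0 3) <= C0 ->
    beta ^ 4 * L2sq (Derive_n u0 4) <= C0 ->
    (* u is a smooth solution, decaying with its derivatives *)
    smooth2 u ->
    decays u ->
    (forall t x, 0 <= t ->
       dt u t x + dx (fun s y => (u s y) ^ 2) t x + beta * pd (false :: false :: false :: nil) u t x
       - beta * pd (true :: false :: false :: nil) u t x
       + beta ^ 2 * pd (true :: false :: false :: false :: false :: nil) u t x
       = eps * pd (false :: false :: nil) u t x) ->
    (forall x, u 0 x = u0 x) ->
    forall t : R, 0 < t ->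
      L2sq (u t) + beta * L2sq (dx u t) + beta ^ 2 * L2sq (dx (dx u) t)
        + 2 * eps * RInt (fun s => L2sq (dx u s)) 0 t <= C /\
      (forall x, Rabs (u t x) <= C * Rpower beta (- (1 / 4))) /\
      (forall x, Rabs (dx u t x) <= C * Rpower beta (- (3 / 4))).
Proof.
  intros C0 HC0. exists (2 * C0 + 1).
  intros eps beta u0 u He Hb _ Hi1 Hi2 _ Hsm Hdec PDE Hu0 t Ht.
  destruct (energy u beta eps t Hsm Hdec Hb He Ht (fun s x Hs => PDE s x Hs)) as [En Fpos].
  destruct (Hdec L0 t ltac:(lra)) as [M0 HM0].
  destruct (Hdec Lx t ltac:(lra)) as [M1 HM1].
  destruct (Hdec Lxx t ltac:(lra)) as [M2 HM2].
  destruct (Hdec Lxxx t ltac:(lra)) as [M3 HM3].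
  assert (D : forall l M s, (forall t0 x, 0 <= t0 <= t -> Rabs (pd l u t0 x) <= M / (1 + x ^ 2)) ->
     0 <= s <= t -> decayb (fun y => pd l u s y) M) by (intros l M s HM Hs x; apply HM; auto).
  assert (G : forall l M s, (forall t0 x, 0 <= t0 <= t -> Rabs (pd l u t0 x) <= M / (1 + x ^ 2)) ->
     0 <= s <= t -> 0 <= Rint (fun y => pd l u s y ^ 2)).
  { intros l M s HM Hs. apply (Rint_pd_ge0 u s l M); auto. }
  assert (Hu0e : u 0 = u0) by (apply functional_extensionality; auto).
  rewrite <- Hu0e in Hi1, Hi2.
  change (L2sq (u 0)) with (Rint (fun y => pd L0 u 0 y ^ 2)) in Hi1.
  change (L2sq (Derive_n (u 0) 1)) with (Rint (fun y => pd Lx u 0 y ^ 2)) in Hi1.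
  change (L2sq (Derive_n (u 0) 2)) with (Rint (fun y => pd Lxx u 0 y ^ 2)) in Hi2.
  change (L2sq (Derive_n (u 0) 3)) with (Rint (fun y => pd Lxxx u 0 y ^ 2)) in Hi2.
  assert (L4 : 0 <= L4pow4 (u 0)).
  { apply (Rint_ge0 _ (M0 ^ 4)). intros; apply cpown; apply (sm_contx u L0 0 x Hsm).
    apply (decayb_pow (fun y => pd L0 u 0 y) M0 3). apply (D L0 M0 0); auto; lra.
    intros y; replace (u 0 y ^ 4) with ((u 0 y ^ 2) ^ 2) by ring; apply pow2_ge_0. }
  assert (G0 : 0 <= Rint (fun y => pd L0 u 0 y ^ 2)) by (apply (G L0 M0 0 HM0); lra).
  assert (G1 : 0 <= Rint (fun y => pd Lx u 0 y ^ 2)) by (apply (G Lx M1 0 HM1); lra).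
  assert (G2 : 0 <= Rint (fun y => pd Lxx u 0 y ^ 2)) by (apply (G Lxx M2 0 HM2); lra).
  assert (G3 : 0 <= Rint (fun y => pd Lxxx u 0 y ^ 2)) by (apply (G Lxxx M3 0 HM3); lra).
  assert (Gt0 : 0 <= L2sq (u t)) by (apply (G L0 M0 t HM0); lra).
  assert (Gt1 : 0 <= L2sq (dx u t)) by (apply (G Lx M1 t HM1); lra).
  assert (Gt2 : 0 <= L2sq (dx (dx u) t)) by (apply (G Lxx M2 t HM2); lra).
  assert (E0 : Ef u beta 0 <= 2 * C0).
  { unfold Ef.
    change (L2sq (u 0)) with (Rint (fun y => pd L0 u 0 y ^ 2)).
    change (L2sq (dx u 0)) with (Rint (fun y => pd Lx u 0 y ^ 2)).
    change (L2sq (dx (dx u) 0)) with (Rint (fun y => pd Lxx u 0 y ^ 2)).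
    set (a := Rint (fun y => pd L0 u 0 y ^ 2)) in *.
    set (a1 := Rint (fun y => pd Lx u 0 y ^ 2)) in *.
    set (a2 := Rint (fun y => pd Lxx u 0 y ^ 2)) in *.
    set (a3 := Rint (fun y => pd Lxxx u 0 y ^ 2)) in *.
    assert (0 <= eps ^ 2 * a1) by (apply Rmult_le_pos; auto; apply pow2_ge_0).
    assert (0 <= (beta * eps + beta * eps ^ 2) * a2) by (apply Rmult_le_pos; auto; nra).
    assert (0 <= (beta ^ 2 * eps ^ 2 + beta ^ 3) * a3) by (apply Rmult_le_pos; auto; nra).
    replace ((beta + eps ^ 2) * a1) with (beta * a1 + eps ^ 2 * a1) in Hi1 by ring.
    replace ((beta * eps + beta * eps ^ 2 + beta ^ 2) * a2) with ((beta * eps + beta * eps ^ 2) * a2 + beta ^ 2 * a2) in Hi2 by ring.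
    lra. }
  assert (Et : Ef u beta t <= 2 * C0).
  { assert (0 <= 2 * eps * RInt (fun s => L2sq (dx u s)) 0 t) by (apply Rmult_le_pos; lra). lra. }
  assert (HC : 2 * C0 + 1 <= (2 * C0 + 1) * (2 * C0 + 1)) by nra.
  set (q := sqrt beta).
  assert (Hq : 0 < q) by (apply sqrt_lt_R0; auto).
  assert (Hqq : q * q = beta) by (apply sqrt_sqrt; lra).
  unfold Ef in Et.
  assert (0 <= beta ^ 2 * L2sq (dx (dx u) t)) by (apply Rmult_le_pos; auto; apply pow2_ge_0).
  assert (0 <= beta * L2sq (dx u t)) by (apply Rmult_le_pos; lra).
  split; [| split].
  - unfold Ef in En, E0. lra.
  - intros x.
    pose proof (sup_bound (fun y => u t y) (fun y => dx u t y) M0 M1 q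
      (fun x => sm_derx u L0 t x Hsm) (fun x => sm_contx u Lx t x Hsm)
      (D L0 M0 t HM0 ltac:(lra)) (D Lx M1 t HM1 ltac:(lra)) Hq x) as S.
    change (u t x ^ 2 <= L2sq (u t) / q + q * L2sq (dx u t)) in S.
    apply abs_from_sq. apply Rmult_le_pos. lra. unfold Rpower; left; apply exp_pos.
    replace ((2 * C0 + 1) * Rpower beta (- (1 / 4)) * ((2 * C0 + 1) * Rpower beta (- (1 / 4))))
      with ((2 * C0 + 1) * (2 * C0 + 1) * (Rpower beta (- (1 / 4)) * Rpower beta (- (1 / 4)))) by ring.
    rewrite rp14 by auto. fold q.
    replace (L2sq (u t) / q + q * L2sq (dx u t)) with ((L2sq (u t) + q * q * L2sq (dx u t)) * / q) in S by (field; lra).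
    rewrite Hqq in S.
    eapply Rle_trans. exact S. apply Rmult_le_compat_r. left; apply Rinv_0_lt_compat; auto. lra.
  - intros x.
    pose proof (sup_bound (fun y => dx u t y) (fun y => dx (dx u) t y) M1 M2 q
      (fun x => sm_derx u Lx t x Hsm) (fun x => sm_contx u Lxx t x Hsm)
      (D Lx M1 t HM1 ltac:(lra)) (D Lxx M2 t HM2 ltac:(lra)) Hq x) as S.
    change (dx u t x ^ 2 <= L2sq (dx u t) / q + q * L2sq (dx (dx u) t)) in S.
    apply abs_from_sq. apply Rmult_le_pos. lra. unfold Rpower; left; apply exp_pos.
    replace ((2 * C0 + 1) * Rpower beta (- (3 / 4)) * ((2 * C0 + 1) * Rpower beta (- (3 / 4))))
      with ((2 * C0 + 1) * (2 * C0 + 1) * (Rpower beta (- (3 / 4)) * Rpower beta (- (3 / 4)))) by ring.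
    rewrite rp34 by auto. fold q.
    replace (L2sq (dx u t) / q + q * L2sq (dx (dx u) t)) with
      ((q * q * L2sq (dx u t) + (q * q) ^ 2 * L2sq (dx (dx u) t)) * / (q * q * q)) in S by (field; lra).
    rewrite Hqq in S.
    eapply Rle_trans. exact S. apply Rmult_le_compat_r. left; apply Rinv_0_lt_compat; nra. lra.
Qed.
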